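(* For each integral geometric Apollonian super-packing there is a Euclidean motion of the plane that maps it to a strongly integral geometric Apollonian super-packing.
   Context: Circles are taken in $\hat{\mathbb C}=\mathbb R^2\cup\{\infty\}$; lines count as circles. A Descartes configuration is a set of four mutually tangent circles with disjoint interiors; an ordered, oriented one carries an ordering and a total orientation, with signed curvatures (reciprocal radius, negative when the interior is unbounded, $0$ for lines, all reversed for negative orientation). Its curvature-center coordinate matrix $M_{\mathcal D}$ is the $4\times3$ matrix with $i$-th row $(b_i,b_ix_i,b_iy_i)$, $b_i$ the signed curvature and $(x_i,y_i)$ the center of the $i$-th circle (for a line: $(0,n_x,n_y)$, $n$ the unit normal pointing into the line's interior half-plane). Let $S_i$ be the $4\times4$ matrix equal to the identity except that row $i$ has $-1$ in position $i$ and $2$ elsewhere, $S_i^\perp=S_i^T$, and $\mathcal A^S=\langle S_i,S_i^\perp\rangle$ the super-Apollonian group, acting on ordered oriented Descartes configurations by left multiplication on their augmented curvature-center coordinates. The geometric super-packing generated by $\mathcal D$ is the set of all circles of configurations in the orbit $\mathcal A^S[\mathcal D]$. It is integral if some (equivalently every) configuration in the orbit has all curvatures integers, and strongly integral if some (equivalently every) configuration in the orbit has $M_{\mathcal D}$ an integer matrix. *)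

(* Defs.v *)
From mathcomp Require Import all_boot all_order all_algebra.
From mathcomp Require Import reals.
Set Implicit Arguments. Unset Strict Implicit. Unset Printing Implicit Defensive.
Import Order.TTheory GRing.Theory Num.Theory.
Local Open Scope ring_scope.

Section Apollonian.
Variable R : realType.

(* Points of the extended plane  C^ = R^2 u {oo};  None = oo. *)
Definition pt := (R * R)%type.
Definition xpt := option pt.

Definition dot (p q : pt) : R := p.1 * q.1 + p.2 * q.2.
Definition d2 (p q : pt) : R := (p.1 - q.1) ^+ 2 + (p.2 - q.2) ^+ 2.

(* An oriented circle is given by its chosen interior (a generalized disk):
   - GDisk c r   : interior {p : |p-c| < r}           (bounded interior)
   - GCoDisk c r : interior {p : |p-c| > r} u {oo}     (unbounded interior)
   - GHalf n h   : interior {p : n.p > h}, n unit normal pointing into it,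
                   boundary is the line {n.p = h} together with oo. *)
Inductive gdisk :=
| GDisk of pt & R
| GCoDisk of pt & R
| GHalf of pt & R.

Definition gdisk_wf (d : gdisk) : Prop :=
  match d with
  | GDisk _ r | GCoDisk _ r => 0 < r
  | GHalf n _ => dot n n = 1
  end.

Definition interior (d : gdisk) (z : xpt) : Prop :=
  match d, z with
  | GDisk c r, Some p => d2 p c < r ^+ 2
  | GDisk _ _, None => False
  | GCoDisk c r, Some p => r ^+ 2 < d2 p c
  | GCoDisk _ _, None => True
  | GHalf n h, Some p => h < dot n p
  | GHalf _ _, None => False
  end.

Definition circle (d : gdisk) (z : xpt) : Prop :=
  match d, z with
  | GDisk c r, Some p | GCoDisk c r, Some p => d2 p c = r ^+ 2
  | GDisk _ _, None | GCoDisk _ _, None => False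
  | GHalf n h, Some p => dot n p = h
  | GHalf _ _, None => True
  end.

Definition tangent (d1 d2 : gdisk) : Prop :=
  exists z, circle d1 z /\ circle d2 z /\
    forall w, circle d1 w -> circle d2 w -> w = z.

Definition disjoint_interiors (d1 d2 : gdisk) : Prop :=
  forall z, ~ (interior d1 z /\ interior d2 z).

(* Ordered, oriented configuration: four oriented circles plus a total
   orientation (true = positive, false = negative). *)
Record config := Config { circ : 'I_4 -> gdisk ; posor : bool }.

Definition is_descartes (D : config) : Prop :=
  (forall i, gdisk_wf (circ D i)) /\
  (forall i j, i != j ->
     tangent (circ D i) (circ D j) /\
     disjoint_interiors (circ D i) (circ D j)).

(* Row (bbar, b, b x, b y) of augmented curvature-center coordinates for a
   positively oriented circle; for a line (bbar, 0, n_x, n_y) with bbar the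
   signed curvature of its image under inversion in the unit circle (= 2h). *)
Definition acc_row (d : gdisk) (k : 'I_4) : R :=
  match d with
  | GDisk c r =>
      let b := r^-1 in
      [:: b * dot c c - b^-1; b; b * c.1; b * c.2]`_k
  | GCoDisk c r =>
      let b := - r^-1 in
      [:: b * dot c c - b^-1; b; b * c.1; b * c.2]`_k
  | GHalf n h => [:: 2 * h; 0; n.1; n.2]`_k
  end.

Definition orsign (D : config) : R := if posor D then 1 else -1.

Definition acc (D : config) : 'M[R]_4 :=
  \matrix_(i < 4, k < 4) (orsign D * acc_row (circ D i) k).

Definition ccmat (D : config) : 'M[R]_(4, 3) :=
  \matrix_(i < 4, k < 3) acc D i (lift ord0 k).

Definition curv (D : config) (i : 'I_4) : R := acc D i (lift ord0 ord0).

Definition Sgen (i : 'I_4) : 'M[R]_4 :=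
  \matrix_(k < 4, l < 4)
    (if k == i then (if l == i then -1 else 2) else (k == l)%:R).

(* The super-Apollonian group A^S = <S_i, S_i^T>.  Since every generator is an
   involution, the group generated equals the monoid generated. *)
Inductive superA : 'M[R]_4 -> Prop :=
| superA1 : superA 1%:M
| superAS i g : superA g -> superA (Sgen i *m g)
| superAST i g : superA g -> superA ((Sgen i)^T *m g).

Definition in_orbit (D D' : config) : Prop :=
  is_descartes D' /\ exists g, superA g /\ acc D' = g *m acc D.

Definition super_packing (D : config) (C : xpt -> Prop) : Prop :=
  exists D', in_orbit D D' /\ exists i, C = circle (circ D' i).

Definition is_int (x : R) : Prop := exists z : int, x = z%:~R.

Definition integral_sp (D : config) : Prop :=
  exists D', in_orbit D D' /\ forall i, is_int (curv D' i).

Definition strongly_integral_sp (D : config) : Prop :=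
  exists D', in_orbit D D' /\ forall i k, is_int (ccmat D' i k).

Definition euclid_motion (f : pt -> pt) : Prop :=
  forall p q, d2 (f p) (f q) = d2 p q.

Definition xmap (f : pt -> pt) (z : xpt) : xpt := omap f z.

Definition image_set (f : pt -> pt) (C : xpt -> Prop) : xpt -> Prop :=
  fun w => exists z, C z /\ w = xmap f z.

End Apollonian.

(* Main.v *)
Require Import Defs.
From mathcomp Require Import all_boot all_order all_algebra.
From mathcomp Require Import reals.
From mathcomp Require Import zify ring lra.
From Stdlib Require Import FunctionalExtensionality PropExtensionality.
Import Order.TTheory GRing.Theory Num.Theory.
Local Open Scope ring_scope.

Record v4 := V4 {e0 : int; e1 : int; e2 : int; e3 : int}.
Definition sm (u : v4) := e0 u + e1 u + e2 u + e3 u.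
Definition dt (u v : v4) := e0 u * e0 v + e1 u * e1 v + e2 u * e2 v + e3 u * e3 v.
Definition q2 u v := 2 * dt u v - sm u * sm v.
Definition frame b := exists U V, q2 b U = 0 /\ q2 b V = 0 /\ q2 U U = 4 /\ q2 V V = 4 /\ q2 U V = 0.

Definition S0 u := V4 (2*(e1 u + e2 u + e3 u) - e0 u) (e1 u) (e2 u) (e3 u).
Definition S1 u := V4 (e0 u) (2*(e0 u + e2 u + e3 u) - e1 u) (e2 u) (e3 u).
Definition S2 u := V4 (e0 u) (e1 u) (2*(e0 u + e1 u + e3 u) - e2 u) (e3 u).
Definition S3 u := V4 (e0 u) (e1 u) (e2 u) (2*(e0 u + e1 u + e2 u) - e3 u).
Definition T0 u := V4 (- e0 u) (e1 u + 2 * e0 u) (e2 u + 2 * e0 u) (e3 u + 2 * e0 u).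
Definition T1 u := V4 (e0 u + 2 * e1 u) (- e1 u) (e2 u + 2 * e1 u) (e3 u + 2 * e1 u).
Definition T2 u := V4 (e0 u + 2 * e2 u) (e1 u + 2 * e2 u) (- e2 u) (e3 u + 2 * e2 u).
Definition T3 u := V4 (e0 u + 2 * e3 u) (e1 u + 2 * e3 u) (e2 u + 2 * e3 u) (- e3 u).

Lemma frame_inv (S : v4 -> v4) b :
  (forall u v, q2 (S u) (S v) = q2 u v) -> (forall u, S (S u) = u) ->
  frame (S b) -> frame b.
Proof.
move=> Hq Hi [U [V [h1 [h2 [h3 [h4 h5]]]]]].
have key : forall x, q2 b (S x) = q2 (S b) x by move=> x; rewrite -{1}(Hi b) Hq.
exists (S U), (S V); rewrite !key !Hq; by [].
Qed.

Ltac qtac := move=> [? ? ? ?] [? ? ? ?]; rewrite /q2 /dt /sm /=; ring.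
Ltac itac := move=> [? ? ? ?]; congr V4; simpl; ring.

Lemma qS0 u v : q2 (S0 u) (S0 v) = q2 u v. Proof. move: u v; qtac. Qed.
Lemma qS1 u v : q2 (S1 u) (S1 v) = q2 u v. Proof. move: u v; qtac. Qed.
Lemma qS2 u v : q2 (S2 u) (S2 v) = q2 u v. Proof. move: u v; qtac. Qed.
Lemma qS3 u v : q2 (S3 u) (S3 v) = q2 u v. Proof. move: u v; qtac. Qed.
Lemma qT0 u v : q2 (T0 u) (T0 v) = q2 u v. Proof. move: u v; qtac. Qed.
Lemma qT1 u v : q2 (T1 u) (T1 v) = q2 u v. Proof. move: u v; qtac. Qed.
Lemma qT2 u v : q2 (T2 u) (T2 v) = q2 u v. Proof. move: u v; qtac. Qed.
Lemma qT3 u v : q2 (T3 u) (T3 v) = q2 u v. Proof. move: u v; qtac. Qed.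

Lemma fS0 b : frame (S0 b) -> frame b.
Proof. apply: frame_inv; [qtac|itac]. Qed.
Lemma fS1 b : frame (S1 b) -> frame b.
Proof. apply: frame_inv; [qtac|itac]. Qed.
Lemma fS2 b : frame (S2 b) -> frame b.
Proof. apply: frame_inv; [qtac|itac]. Qed.
Lemma fS3 b : frame (S3 b) -> frame b.
Proof. apply: frame_inv; [qtac|itac]. Qed.
Lemma fT0 b : frame (T0 b) -> frame b.
Proof. apply: frame_inv; [qtac|itac]. Qed.
Lemma fT1 b : frame (T1 b) -> frame b.
Proof. apply: frame_inv; [qtac|itac]. Qed.
Lemma fT2 b : frame (T2 b) -> frame b.
Proof. apply: frame_inv; [qtac|itac]. Qed.
Lemma fT3 b : frame (T3 b) -> frame b.
Proof. apply: frame_inv; [qtac|itac]. Qed.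

Definition Ng u := V4 (- e0 u) (- e1 u) (- e2 u) (- e3 u).
Lemma fNg b : frame (Ng b) -> frame b.
Proof. apply: frame_inv; [qtac|itac]. Qed.

Lemma base b : (e0 b = e1 b /\ e2 b = e3 b) \/ (e0 b = e2 b /\ e1 b = e3 b)
  \/ (e0 b = e3 b /\ e1 b = e2 b) -> frame b.
Proof.
case: b => a0 a1 a2 a3 /=; rewrite /frame /q2 /dt /sm /=.
case=> [[-> ->]|[[-> ->]|[-> ->]]].
- exists (V4 1 (-1) 0 0), (V4 0 0 1 (-1)); rewrite /=; lia.
- exists (V4 1 0 (-1) 0), (V4 0 1 0 (-1)); rewrite /=; lia.
- exists (V4 1 0 0 (-1)), (V4 0 1 (-1) 0); rewrite /=; lia.
Qed.

Lemma bound_big (s x y z w : int) : 0 < s -> 2 * (x*x + y*y + z*z + w*w) = s * s ->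
  0 < x -> x < s.
Proof. move=> hs h hx; nia. Qed.

Lemma bound_neg (s x y z w : int) : s = x + y + z + w -> 0 < s ->
  2 * (x*x + y*y + z*z + w*w) = s * s -> x < 0 -> - 2 * x < s.
Proof.
move=> hsum hs h hx.
have cs : (y + z + w) * (y + z + w) <= 3 * (y*y + z*z + w*w).
  have : 0 <= (y - z) * (y - z) + (z - w) * (z - w) + (y - w) * (y - w).
    by rewrite !addr_ge0 // -expr2 sqr_ge0.
  nia.
nia.
Qed.

Lemma sq_zero (s x : int) : 0 <= x -> 2 * x <= s -> x * (s - 2 * x) = 0 ->
  x = 0 \/ 2 * x = s.
Proof. move=> h1 h2 h3; nia. Qed.

Lemma pos_case b : 0 < sm b -> q2 b b = 0 ->
  (forall b', `|sm b'| < sm b -> q2 b' b' = 0 -> frame b') -> frame b.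
Proof.
move=> hs hn IH.
have hn' : 2 * (e0 b*e0 b + e1 b*e1 b + e2 b*e2 b + e3 b*e3 b) = sm b * sm b.
  by move: hn; rewrite /q2 /dt; lia.
have hsum : sm b = e0 b + e1 b + e2 b + e3 b by [].
case: (ltrP (sm b) (2 * e0 b)) => h0.
  apply: fS0; apply: IH; last by rewrite qS0.
  have := @bound_big (sm b) (e0 b) (e1 b) (e2 b) (e3 b) hs hn'; rewrite /sm /= -/(sm b); lia.
case: (ltrP (sm b) (2 * e1 b)) => h1.
  apply: fS1; apply: IH; last by rewrite qS1.
  have := @bound_big (sm b) (e1 b) (e0 b) (e2 b) (e3 b) hs ltac:(lia).
  rewrite /sm /= -/(sm b); lia.
case: (ltrP (sm b) (2 * e2 b)) => h2.
  apply: fS2; apply: IH; last by rewrite qS2.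
  have := @bound_big (sm b) (e2 b) (e0 b) (e1 b) (e3 b) hs ltac:(lia).
  rewrite /sm /= -/(sm b); lia.
case: (ltrP (sm b) (2 * e3 b)) => h3.
  apply: fS3; apply: IH; last by rewrite qS3.
  have := @bound_big (sm b) (e3 b) (e0 b) (e1 b) (e2 b) hs ltac:(lia).
  rewrite /sm /= -/(sm b); lia.
case: (ltrP (e0 b) 0) => g0.
  apply: fT0; apply: IH; last by rewrite qT0.
  have := @bound_neg (sm b) (e0 b) (e1 b) (e2 b) (e3 b) hsum hs hn' g0.
  rewrite /sm /= -/(sm b); lia.
case: (ltrP (e1 b) 0) => g1.
  apply: fT1; apply: IH; last by rewrite qT1.
  have := @bound_neg (sm b) (e1 b) (e0 b) (e2 b) (e3 b) ltac:(lia) hs ltac:(lia) g1.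
  rewrite /sm /= -/(sm b); lia.
case: (ltrP (e2 b) 0) => g2.
  apply: fT2; apply: IH; last by rewrite qT2.
  have := @bound_neg (sm b) (e2 b) (e0 b) (e1 b) (e3 b) ltac:(lia) hs ltac:(lia) g2.
  rewrite /sm /= -/(sm b); lia.
case: (ltrP (e3 b) 0) => g3.
  apply: fT3; apply: IH; last by rewrite qT3.
  have := @bound_neg (sm b) (e3 b) (e0 b) (e1 b) (e2 b) ltac:(lia) hs ltac:(lia) g3.
  rewrite /sm /= -/(sm b); lia.
apply: base.
have t0 : 0 <= e0 b * (sm b - 2 * e0 b) by apply: mulr_ge0; lia.
have t1 : 0 <= e1 b * (sm b - 2 * e1 b) by apply: mulr_ge0; lia.
have t2 : 0 <= e2 b * (sm b - 2 * e2 b) by apply: mulr_ge0; lia.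
have t3 : 0 <= e3 b * (sm b - 2 * e3 b) by apply: mulr_ge0; lia.
have tot : e0 b * (sm b - 2 * e0 b) + e1 b * (sm b - 2 * e1 b) +
   e2 b * (sm b - 2 * e2 b) + e3 b * (sm b - 2 * e3 b) = 0.
  have -> : e0 b * (sm b - 2 * e0 b) + e1 b * (sm b - 2 * e1 b) +
   e2 b * (sm b - 2 * e2 b) + e3 b * (sm b - 2 * e3 b) =
   sm b * sm b - 2 * (e0 b*e0 b + e1 b*e1 b + e2 b*e2 b + e3 b*e3 b).
    by rewrite hsum; ring.
  by rewrite hn' subrr.
have := @sq_zero (sm b) (e0 b) g0 h0 ltac:(lia).
have := @sq_zero (sm b) (e1 b) g1 h1 ltac:(lia).
have := @sq_zero (sm b) (e2 b) g2 h2 ltac:(lia).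
have := @sq_zero (sm b) (e3 b) g3 h3 ltac:(lia).
move: hsum hs; lia.
Qed.

Lemma frame_all_n (n : nat) b : `|sm b| <= n%:Z -> q2 b b = 0 -> frame b.
Proof.
elim: n b => [|n IH] b hb hn.
  have s0 : sm b = 0 by lia.
  apply: base.
  have : e0 b * e0 b + e1 b * e1 b + e2 b * e2 b + e3 b * e3 b = 0.
    by move: hn; rewrite /q2 /dt s0; lia.
  have q0 := sqr_ge0 (e0 b); have q1 := sqr_ge0 (e1 b).
  have q3 := sqr_ge0 (e2 b); have q4 := sqr_ge0 (e3 b).
  rewrite !expr2 in q0 q1 q3 q4 => H.
  have z0 : e0 b * e0 b = 0 by lia.
  have z1 : e1 b * e1 b = 0 by lia.
  have z2 : e2 b * e2 b = 0 by lia.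
  have z3 : e3 b * e3 b = 0 by lia.
  have y0 : e0 b = 0 by nia.
  have y1 : e1 b = 0 by nia.
  have y2 : e2 b = 0 by nia.
  have y3 : e3 b = 0 by nia.
  lia.
have gen : forall b', 0 < sm b' -> `|sm b'| <= n.+1%:Z -> q2 b' b' = 0 -> frame b'.
  move=> b' hp hb' hn'; apply: pos_case => // b'' hl hq; apply: IH => //; lia.
case: (ltrgtP (sm b) 0) => hs.
- apply: fNg; apply: gen.
  + by move: hs; rewrite /sm /=; lia.
  + by move: hb; rewrite /sm /=; lia.
  + by move: hn; rewrite /q2 /dt /sm /=; lia.
- by apply: gen.
- apply: IH => //; lia.
Qed.

Lemma frame_all b : q2 b b = 0 -> frame b.
Proof. move=> h; apply: (@frame_all_n `|sm b|%N) => //; lia. Qed.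

Set Implicit Arguments. Unset Strict Implicit. Unset Printing Implicit Defensive.

Section G.
Variable R : realType.
Implicit Types (p q c : pt R) (r : R).

Lemma cs2 (u1 u2 v1 v2 : R) : (u1*v1 + u2*v2)^+2 <= (u1^+2 + u2^+2) * (v1^+2 + v2^+2).
Proof.
have : 0 <= (u1 * v2 - u2 * v1)^+2 by apply: sqr_ge0.
move=> h; rewrite -subr_ge0; apply: le_trans h _; rewrite le_eqVlt; apply/orP; left; apply/eqP; ring.
Qed.

Lemma tri_up c1 c2 p r1 r2 : 0 < r1 -> 0 < r2 -> d2 p c1 = r1^+2 -> d2 p c2 = r2^+2 ->
  d2 c1 c2 <= (r1 + r2)^+2.
Proof.
move=> h1 h2; rewrite /d2 => e1 e2.
set u1 := p.1 - c1.1; set u2 := p.2 - c1.2; set v1 := p.1 - c2.1; set v2 := p.2 - c2.2.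
have -> : (c1.1 - c2.1)^+2 + (c1.2 - c2.2)^+2 = (u1^+2 + u2^+2) + (v1^+2 + v2^+2) - 2 * (u1*v1 + u2*v2)
  by rewrite /u1 /u2 /v1 /v2; ring.
rewrite e1 e2.
have := cs2 u1 u2 v1 v2; rewrite e1 e2 => hc.
have : - (r1 * r2) <= u1*v1 + u2*v2.
  case: (lerP (- (r1 * r2)) (u1*v1 + u2*v2)) => // hlt.
  exfalso; move: hc; apply/negP; rewrite -ltNge.
  have hp : 0 < r1 * r2 by apply: mulr_gt0.
  nra.
nra.
Qed.

Lemma tri_lo c1 c2 p r1 r2 : 0 < r1 -> 0 < r2 -> d2 p c1 = r1^+2 -> d2 p c2 = r2^+2 ->
  (r1 - r2)^+2 <= d2 c1 c2.
Proof.
move=> h1 h2; rewrite /d2 => e1 e2.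
set u1 := p.1 - c1.1; set u2 := p.2 - c1.2; set v1 := p.1 - c2.1; set v2 := p.2 - c2.2.
have -> : (c1.1 - c2.1)^+2 + (c1.2 - c2.2)^+2 = (u1^+2 + u2^+2) + (v1^+2 + v2^+2) - 2 * (u1*v1 + u2*v2)
  by rewrite /u1 /u2 /v1 /v2; ring.
rewrite e1 e2.
have := cs2 u1 u2 v1 v2; rewrite e1 e2 => hc.
have : u1*v1 + u2*v2 <= r1 * r2.
  case: (lerP (u1*v1 + u2*v2) (r1 * r2)) => // hlt.
  exfalso; move: hc; apply/negP; rewrite -ltNge.
  have hp : 0 < r1 * r2 by apply: mulr_gt0.
  nra.
nra.
Qed.

Lemma dd_meet c1 c2 r1 r2 : 0 < r1 -> 0 < r2 -> d2 c1 c2 < (r1 + r2)^+2 ->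
  exists z : pt R, d2 z c1 < r1^+2 /\ d2 z c2 < r2^+2.
Proof.
move=> h1 h2 hD.
have hs : 0 < r1 + r2 by apply: addr_gt0.
set l := r1 / (r1 + r2).
exists (c1.1 + l * (c2.1 - c1.1), c1.2 + l * (c2.2 - c1.2)).
have hl1 : l * (r1 + r2) = r1 by rewrite /l mulfVK // gt_eqF.
have hl2 : (1 - l) * (r1 + r2) = r2 by rewrite mulrBl mul1r hl1; ring.
have hD' : d2 c1 c2 = d2 c2 c1 by rewrite /d2; ring.
rewrite /d2 /=; split.
  have -> : (c1.1 + l * (c2.1 - c1.1) - c1.1) ^+ 2 + (c1.2 + l * (c2.2 - c1.2) - c1.2) ^+ 2
     = l^+2 * d2 c2 c1 by rewrite /d2; ring.
  have lp : 0 < l^+2 by rewrite exprn_gt0 // /l divr_gt0.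
  have : l^+2 * d2 c1 c2 < l^+2 * (r1+r2)^+2 by rewrite ltr_pM2l.
  by rewrite -exprMn hl1 -hD'.
have -> : (c1.1 + l * (c2.1 - c1.1) - c2.1) ^+ 2 + (c1.2 + l * (c2.2 - c1.2) - c2.2) ^+ 2
     = (1 - l)^+2 * d2 c1 c2 by rewrite /d2; ring.
have lp : 0 < (1 - l)^+2.
  by rewrite exprn_gt0 // subr_gt0 /l ltr_pdivrMr // mul1r ltrDl.
have : (1-l)^+2 * d2 c1 c2 < (1-l)^+2 * (r1+r2)^+2 by rewrite ltr_pM2l.
by rewrite -exprMn hl2.
Qed.

Lemma dc_meet c1 c2 r1 r2 : 0 < r1 -> 0 < r2 -> (r2 - r1)^+2 < d2 c1 c2 ->
  exists z : pt R, d2 z c1 < r1^+2 /\ r2^+2 < d2 z c2.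
Proof.
move=> h1 h2 hD.
have Dpos : 0 < d2 c1 c2 by apply: le_lt_trans hD; apply: sqr_ge0.
set d := Num.sqrt (d2 c1 c2).
have dpos : 0 < d by rewrite sqrtr_gt0.
have dd : d^+2 = d2 c1 c2 by rewrite sqr_sqrtr // ltW.
have hd : r2 - r1 < d.
  case: (lerP d (r2 - r1)) => // hle; exfalso.
  move: hD; rewrite -dd; apply/negP; rewrite -leNgt.
  by rewrite ler_sqr ?nnegrE ?(ltW dpos) // (le_trans (ltW dpos)).
set s := (Num.max 0 (r2 - d) + r1) / 2.
have sge : Num.max 0 (r2 - d) < s /\ s < r1.
  have : Num.max 0 (r2 - d) < r1 by rewrite gt_max h1 /= ltrBlDr -ltrBlDl.
  by rewrite /s; split; lra.
have s0 : 0 < s by case: sge => h _; apply: le_lt_trans h; rewrite le_max lexx.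
have s1 : r2 < d + s by case: sge => h _; move: h; rewrite gt_max => /andP[_]; lra.
set m := s / d.
have md : m * d = s by rewrite /m mulfVK // gt_eqF.
exists (c1.1 + m * (c1.1 - c2.1), c1.2 + m * (c1.2 - c2.2)).
rewrite /d2 /=; split.
  have -> : (c1.1 + m * (c1.1 - c2.1) - c1.1) ^+ 2 + (c1.2 + m * (c1.2 - c2.2) - c1.2) ^+ 2
     = (m * d)^+2 by rewrite exprMn dd /d2; ring.
  rewrite md; case: sge => _ hs1; nra.
have -> : (c1.1 + m * (c1.1 - c2.1) - c2.1) ^+ 2 + (c1.2 + m * (c1.2 - c2.2) - c2.2) ^+ 2
     = (d + m * d)^+2.
  by rewrite (_ : (d + m*d)^+2 = (1+m)^+2 * d^+2); [rewrite dd /d2; ring | ring].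
rewrite md; nra.
Qed.

Lemma dh_eq c r n h p : 0 < r -> dot n n = 1 -> d2 p c = r^+2 -> dot n p = h ->
  (forall z : pt R, ~ (d2 z c < r^+2 /\ h < dot n z)) -> h - dot n c = r.
Proof.
rewrite /dot /d2 => hr hn hp hh hdis.
set e := h - (n.1 * c.1 + n.2 * c.2).
have he : e^+2 <= r^+2.
  have -> : e = n.1 * (p.1 - c.1) + n.2 * (p.2 - c.2) by rewrite /e -hh; ring.
  by rewrite -hp -[X in _ <= X]mul1r -hn -!expr2; apply: cs2.
have he2 : - r <= e by nra.
have : r <= e.
  case: (lerP r e) => // hlt; exfalso.
  set l := (r + e) / 2.
  apply: (hdis (c.1 + l * n.1, c.2 + l * n.2)); rewrite /=; split.
    have -> : (c.1 + l * n.1 - c.1) ^+ 2 + (c.2 + l * n.2 - c.2) ^+ 2 = l^+2 * (n.1 * n.1 + n.2 * n.2)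
      by ring.
    rewrite hn mulr1 /l; nra.
  have -> : n.1 * (c.1 + l * n.1) + n.2 * (c.2 + l * n.2) = (n.1 * c.1 + n.2 * c.2) + l * (n.1 * n.1 + n.2 * n.2)
      by ring.
  rewrite hn mulr1 /l; move: hlt; rewrite /e; lra.
nra.
Qed.

Lemma ch_meet c r n h : 0 < r -> dot n n = 1 ->
  exists z : pt R, r^+2 < d2 z c /\ h < dot n z.
Proof.
rewrite /dot /d2 => hr hn.
set l := `|h - (n.1 * c.1 + n.2 * c.2)| + r + 1.
have hl : r < l by rewrite /l; have := normr_ge0 (h - (n.1 * c.1 + n.2 * c.2)); lra.
exists (c.1 + l * n.1, c.2 + l * n.2); rewrite /=; split.
  have -> : (c.1 + l * n.1 - c.1) ^+ 2 + (c.2 + l * n.2 - c.2) ^+ 2 = l^+2 * (n.1 * n.1 + n.2 * n.2)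
    by ring.
  rewrite hn mulr1; nra.
have -> : n.1 * (c.1 + l * n.1) + n.2 * (c.2 + l * n.2) = (n.1 * c.1 + n.2 * c.2) + l * (n.1 * n.1 + n.2 * n.2)
    by ring.
rewrite hn mulr1 /l.
have := ler_norm (h - (n.1 * c.1 + n.2 * c.2)); lra.
Qed.

Lemma hh_eq n1 h1 n2 h2 : dot n1 n1 = 1 -> dot n2 n2 = 1 ->
  (forall z : pt R, ~ (h1 < dot n1 z /\ h2 < dot n2 z)) -> dot n1 n2 = -1.
Proof.
rewrite /dot => e1 e2 hdis.
set k := n1.1 * n2.1 + n1.2 * n2.2.
have hk : k^+2 <= 1 by rewrite -(mulr1 1) -{1}e1 -e2 -!expr2; apply: cs2.
have hk1 : -1 <= k by nra.
case: (lerP k (-1)) => hk2; first by apply/eqP; rewrite eq_le hk2 hk1.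
exfalso.
set M := `|h1| + `|h2| + 1.
set l := M / (1 + k).
have pk : 0 < 1 + k by lra.
have hl : l * (1 + k) = M by rewrite /l mulfVK // gt_eqF.
apply: (hdis (l * (n1.1 + n2.1), l * (n1.2 + n2.2))); rewrite /=.
have -> : n1.1 * (l * (n1.1 + n2.1)) + n1.2 * (l * (n1.2 + n2.2)) = l * ((n1.1 * n1.1 + n1.2 * n1.2) + k)
  by rewrite /k; ring.
have -> : n2.1 * (l * (n1.1 + n2.1)) + n2.2 * (l * (n1.2 + n2.2)) = l * ((n2.1 * n2.1 + n2.2 * n2.2) + k)
  by rewrite /k; ring.
rewrite e1 e2 hl /M.
have := ler_norm h1; have := ler_norm h2; have := normr_ge0 h1; have := normr_ge0 h2; lra.
Qed.
End G.


Definition i0 : 'I_4 := @Ordinal 4 0 isT.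
Definition i1 : 'I_4 := @Ordinal 4 1 isT.
Definition i2 : 'I_4 := @Ordinal 4 2 isT.
Definition i3 : 'I_4 := @Ordinal 4 3 isT.

Section G2.
Variable R : realType.

Definition Qr (u v : 'I_4 -> R) := u i2 * v i2 + u i3 * v i3 - (u i0 * v i1 + u i1 * v i0) / 2.

Lemma QrC u v : Qr u v = Qr v u. Proof. rewrite /Qr; ring. Qed.

Lemma Qself (d : gdisk R) : gdisk_wf d -> Qr (acc_row d) (acc_row d) = 1.
Proof.
case: d => [c r|c r|n h] /= hw; rewrite /Qr /acc_row /= ?/dot.
- field; rewrite gt_eqF //.
- field; rewrite gt_eqF //.
- by move: hw; rewrite /dot => hw; rewrite -hw; ring.
Qed.

Definition meet (d1 d2 : gdisk R) := exists z, circle d1 z /\ circle d2 z.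

Lemma meetC d1 d2 : meet d1 d2 -> meet d2 d1.
Proof. by case=> z [h1 h2]; exists z. Qed.
Lemma disjC (d1 d2 : gdisk R) : disjoint_interiors d1 d2 -> disjoint_interiors d2 d1.
Proof. by move=> h z [a b]; apply: (h z). Qed.

Lemma Qcore (d1 d2 : gdisk R) : gdisk_wf d1 -> gdisk_wf d2 -> meet d1 d2 ->
  disjoint_interiors d1 d2 ->
  match d1, d2 with
  | GCoDisk _ _, GDisk _ _ | GHalf _ _, GDisk _ _ | GHalf _ _, GCoDisk _ _ => True
  | _, _ => Qr (acc_row d1) (acc_row d2) = -1
  end.
Proof.
case: d1 => [c1 r1|c1 r1|n1 h1]; case: d2 => [c2 r2|c2 r2|n2 h2] //= w1 w2 hm hdis.
-
  case: hm => [[p|]] [m1 m2] //.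
  have hD : d2 c1 c2 = (r1 + r2)^+2.
    apply/eqP; rewrite eq_le (tri_up w1 w2 m1 m2) /=; rewrite leNgt; apply/negP => hlt.
    case: (dd_meet w1 w2 hlt) => z hz; exact: (hdis (Some z)).
  move: hD; rewrite /Qr /acc_row /= /dot /d2 => hD.
  have -> : r1^-1 * c1.1 * (r2^-1 * c2.1) + r1^-1 * c1.2 * (r2^-1 * c2.2) -
    ((r1^-1 * (c1.1 * c1.1 + c1.2 * c1.2) - r1^-1^-1) * r2^-1 +
     r1^-1 * (r2^-1 * (c2.1 * c2.1 + c2.2 * c2.2) - r2^-1^-1)) / 2
    = (r1^+2 + r2^+2 - ((c1.1 - c2.1) ^+ 2 + (c1.2 - c2.2) ^+ 2)) / (2 * r1 * r2).
    by field; rewrite !gt_eqF.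
  by rewrite hD; field; rewrite !gt_eqF.
-
  case: hm => [[p|]] [m1 m2] //.
  have hD : d2 c1 c2 = (r2 - r1)^+2.
    apply/eqP; rewrite eq_le; apply/andP; split; last first.
      have := tri_lo w1 w2 m1 m2.
      by rewrite (_ : (r1 - r2)^+2 = (r2 - r1)^+2) //; ring.
    rewrite leNgt; apply/negP => hlt.
    case: (dc_meet w1 w2 hlt) => z hz; exact: (hdis (Some z)).
  move: hD; rewrite /Qr /acc_row /= /dot /d2 => hD.
  have -> : r1^-1 * c1.1 * (- r2^-1 * c2.1) + r1^-1 * c1.2 * (- r2^-1 * c2.2) -
    ((r1^-1 * (c1.1 * c1.1 + c1.2 * c1.2) - r1^-1^-1) * - r2^-1 +
     r1^-1 * (- r2^-1 * (c2.1 * c2.1 + c2.2 * c2.2) - (- r2^-1)^-1)) / 2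
    = (r1^+2 + r2^+2 - ((c1.1 - c2.1) ^+ 2 + (c1.2 - c2.2) ^+ 2)) / (- (2 * r1 * r2)).
    by field; rewrite !gt_eqF.
  by rewrite hD; field; rewrite !gt_eqF.
-
  case: hm => [[p|]] [m1 m2] //.
  have he := dh_eq w1 w2 m1 m2 (fun z hz => hdis (Some z) hz).
  rewrite /Qr /acc_row /= -he; move: he; rewrite /dot => he.
  by field; rewrite he gt_eqF.
- (* codisk codisk : both contain oo *)
  by exfalso; apply: (hdis None); split.
- exfalso; case: (ch_meet c1 h2 w1 w2) => z hz; exact: (hdis (Some z)).
- have hk := hh_eq w1 w2 (fun z hz => hdis (Some z) hz).
  rewrite /Qr /acc_row /= -hk /dot; ring.
Qed.

Lemma Qpair (d1 d2 : gdisk R) : gdisk_wf d1 -> gdisk_wf d2 -> meet d1 d2 ->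
  disjoint_interiors d1 d2 -> Qr (acc_row d1) (acc_row d2) = -1.
Proof.
move=> w1 w2 hm hd.
have h1 := Qcore w1 w2 hm hd.
have h2 := Qcore w2 w1 (meetC hm) (disjC hd).
move: h1 h2; case: d1 {w1 hm hd} => [? ?|? ?|? ?]; case: d2 {w2} => [? ?|? ?|? ?] //= h1 h2;
  by rewrite QrC.
Qed.
End G2.


Lemma ord4P (i : 'I_4) : i = i0 \/ i = i1 \/ i = i2 \/ i = i3.
Proof.
case: i => [[|[|[|[|m]]]] hm].
- by left; apply: val_inj.
- by right; left; apply: val_inj.
- by right; right; left; apply: val_inj.
- by right; right; right; apply: val_inj.
- by [].
Qed.

Lemma sum4 (V : nmodType) (F : 'I_4 -> V) : \sum_(k < 4) F k = F i0 + F i1 + F i2 + F i3.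
Proof.
rewrite !big_ord_recr big_ord0 /= add0r.
by congr (_ + _ + _ + _); congr F; apply: val_inj.
Qed.

Section G3.
Variable R : realType.

Definition qd (u v : 'I_4 -> R) :=
  u i0 * v i0 + u i1 * v i1 + u i2 * v i2 + u i3 * v i3
  - (u i0 + u i1 + u i2 + u i3) * (v i0 + v i1 + v i2 + v i3) / 2.

Definition Qm : 'M[R]_4 := \matrix_(k, l)
  (if (k == i2) && (l == i2) then 1 else if (k == i3) && (l == i3) then 1
   else if (k == i0) && (l == i1) then - 2^-1 else if (k == i1) && (l == i0) then - 2^-1 else 0).
Definition Qi : 'M[R]_4 := \matrix_(k, l)
  (if (k == i2) && (l == i2) then 1 else if (k == i3) && (l == i3) then 1
   else if (k == i0) && (l == i1) then - 2 else if (k == i1) && (l == i0) then - 2 else 0).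
Definition Gm : 'M[R]_4 := \matrix_(i, j) (if i == j then 1 else -1).
Definition Gi : 'M[R]_4 := \matrix_(i, j) ((i == j)%:R / 2 - 4^-1).

Ltac ocase i := case: (ord4P i) => [->|[->|[->|->]]].

Lemma GmGi : Gm *m Gi = 1%:M.
Proof.
apply/matrixP => i j; rewrite !mxE sum4 !mxE.
by ocase i; ocase j; rewrite /=; field.
Qed.

Lemma QiQm : Qi *m Qm = 1%:M.
Proof.
apply/matrixP => i j; rewrite !mxE sum4 !mxE.
by ocase i; ocase j; rewrite /=; field.
Qed.

Lemma WQW (W : 'M[R]_4) i j : (W *m Qm *m W^T) i j = Qr (fun k => W i k) (fun k => W j k).
Proof.
rewrite !mxE sum4 !mxE !sum4 !mxE /Qr /=; ring.
Qed.

Lemma orsign2 (D : config R) : orsign D * orsign D = 1.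
Proof. by rewrite /orsign; case: (posor D); rewrite ?mulr1 ?mulrNN ?mulr1. Qed.

Lemma gram (D : config R) : is_descartes D -> acc D *m Qm *m (acc D)^T = Gm.
Proof.
case=> hw ht; apply/matrixP => i j; rewrite WQW [RHS]mxE.
have -> : Qr (fun k => acc D i k) (fun k => acc D j k) =
   orsign D * orsign D * Qr (acc_row (circ D i)) (acc_row (circ D j)).
  by rewrite /Qr !mxE; ring.
rewrite orsign2 mul1r.
case: eqP => [<-|/eqP hij]; first exact: Qself.
case: (ht i j hij) => [[z [h1 [h2 _]]] hd].
by apply: Qpair => //; exists z.
Qed.

Definition colv (W : 'M[R]_4) k := fun i => W i k.

Lemma WGW (W : 'M[R]_4) k l : (W^T *m Gi *m W) k l = qd (colv W k) (colv W l) / 2.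
Proof.
rewrite !mxE sum4 !mxE !sum4 !mxE /qd /colv /=; by field.
Qed.

Lemma gram_dual (D : config R) : is_descartes D ->
  forall k l, qd (colv (acc D) k) (colv (acc D) l) = 2 * Qi k l.
Proof.
move=> hD k l.
set W := acc D.
have h1 : W *m (Qm *m W^T *m Gi) = 1%:M by rewrite !mulmxA gram // GmGi.
have h2 := mulmx1C h1.
have h3 : W^T *m Gi *m W = Qi.
  by rewrite -[RHS]mulmx1 -h2 !mulmxA QiQm mul1mx.
have := WGW W k l; rewrite h3 => e.
by rewrite e; field.
Qed.

Lemma decompW (W : 'M[R]_4) (Z : 'I_4 -> R) : W *m (Qm *m W^T *m Gi) = 1%:M ->
  qd (colv W i1) Z = 0 -> qd (colv W i2) Z = 0 -> qd (colv W i3) Z = 0 ->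
  forall i, Z i = W i i1 * (- qd (colv W i0) Z / 4).
Proof.
move=> h1 e1 e2 e3 i.
set Zc : 'cV[R]_4 := \col_j Z j.
have : Zc i 0 = (W *m (Qm *m W^T *m Gi *m Zc)) i 0 by rewrite mulmxA h1 mul1mx.
have -> : (W *m (Qm *m W^T *m Gi *m Zc)) i 0 =
   W i i0 * (- 2^-1 * (qd (colv W i1) Z / 2)) + W i i1 * (- 2^-1 * (qd (colv W i0) Z / 2))
   + W i i2 * (qd (colv W i2) Z / 2) + W i i3 * (qd (colv W i3) Z / 2).
  do 6 (rewrite ?sum4; rewrite ?mxE). rewrite /qd /colv /=. field. by [].
rewrite e1 e2 e3 /Zc mxE => ->. field. by [].
Qed.

Lemma decomp (D : config R) (Z : 'I_4 -> R) : is_descartes D ->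
  qd (colv (acc D) i1) Z = 0 -> qd (colv (acc D) i2) Z = 0 -> qd (colv (acc D) i3) Z = 0 ->
  forall i, Z i = acc D i i1 * (- qd (colv (acc D) i0) Z / 4).
Proof.
move=> hD; apply: decompW.
by rewrite !mulmxA gram // GmGi.
Qed.
End G3.


Section G4.
Variable R : realType.

Record mot := Mot {ma : R; mb : R; mc : R; md : R; mt1 : R; mt2 : R}.

Definition orth (m : mot) :=
  ma m * ma m + mb m * mb m = 1 /\ mc m * mc m + md m * md m = 1 /\
      ma m * mc m + mb m * md m = 0 /\ ma m * ma m + mc m * mc m = 1 /\
      mb m * mb m + md m * md m = 1 /\ ma m * mb m + mc m * md m = 0.

Definition fm (m : mot) (p : pt R) : pt R :=
  (ma m * p.1 + mb m * p.2 + mt1 m, mc m * p.1 + md m * p.2 + mt2 m).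
Definition Am (m : mot) (p : pt R) : pt R :=
  (ma m * p.1 + mb m * p.2, mc m * p.1 + md m * p.2).
Definition tm (m : mot) : pt R := (mt1 m, mt2 m).

Definition mapd (m : mot) (d : gdisk R) : gdisk R :=
  match d with
  | GDisk c r => GDisk (fm m c) r
  | GCoDisk c r => GCoDisk (fm m c) r
  | GHalf n h => GHalf (Am m n) (h + dot (Am m n) (tm m))
  end.

Definition mapD (m : mot) (D : config R) : config R :=
  Config (fun i => mapd m (circ D i)) (posor D).

Definition minv (m : mot) : mot :=
  Mot (ma m) (mc m) (mb m) (md m) (- (ma m * mt1 m + mc m * mt2 m))
      (- (mb m * mt1 m + md m * mt2 m)).

Lemma orth_minv m : orth m -> orth (minv m).
Proof. by rewrite /orth /=; move=> [? [? [? [? [? ?]]]]]; do !split. Qed.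

Lemma minvK m : orth m -> minv (minv m) = m.
Proof.
case: m => a b c d t1 t2 [h1 [h2 [h3 [h4 [h5 h6]]]]] /=; rewrite /minv /=; congr Mot.
- transitivity ((a * a + b * b) * t1 + (a * c + b * d) * t2); first ring.
  by rewrite h1 h3; ring.
- transitivity ((a * c + b * d) * t1 + (c * c + d * d) * t2); first ring.
  by rewrite h2 h3; ring.
Qed.

Lemma fmK m p : orth m -> fm (minv m) (fm m p) = p.
Proof.
case: m => a b c d t1 t2 [h1 [h2 [h3 [h4 [h5 h6]]]]] /=; case: p => x y; rewrite /fm /=; congr (_, _).
- transitivity ((a * a + c * c) * x + (a * b + c * d) * y); first ring.
  by rewrite h4 h6; ring.
- transitivity ((a * b + c * d) * x + (b * b + d * d) * y); first ring.
  by rewrite h5 h6; ring.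
Qed.

Lemma fmKV m p : orth m -> fm m (fm (minv m) p) = p.
Proof. by move=> h; rewrite -{1}(minvK h) (fmK _ (orth_minv h)). Qed.

Lemma d2_fm m p q : orth m -> d2 (fm m p) (fm m q) = d2 p q.
Proof.
case: m => a b c d t1 t2 [h1 [h2 [h3 [h4 [h5 h6]]]]] /=; rewrite /d2 /fm /=.
set u := p.1 - q.1; set v := p.2 - q.2.
transitivity ((a * a + c * c) * u^+2 + 2 * (a * b + c * d) * u * v + (b * b + d * d) * v ^+2).
  by rewrite /u /v; ring.
by rewrite h4 h5 h6; ring.
Qed.

Lemma dot_Am m n p : orth m -> dot (Am m n) (fm m p) = dot n p + dot (Am m n) (tm m).
Proof.
case: m => a b c d t1 t2 [h1 [h2 [h3 [h4 [h5 h6]]]]] /=; rewrite /dot /Am /fm /tm /=.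
transitivity ((a * a + c * c) * n.1 * p.1 + (a * b + c * d) * (n.1 * p.2 + n.2 * p.1)
   + (b * b + d * d) * n.2 * p.2 +
  ((a * n.1 + b * n.2) * t1 + (c * n.1 + d * n.2) * t2)); first ring.
by rewrite h4 h5 h6; ring.
Qed.

Lemma dot_Am2 m n : orth m -> dot (Am m n) (Am m n) = dot n n.
Proof.
case: m => a b c d t1 t2 [h1 [h2 [h3 [h4 [h5 h6]]]]] /=; rewrite /dot /Am /=.
transitivity ((a * a + c * c) * n.1 * n.1 + 2 * (a * b + c * d) * n.1 * n.2
   + (b * b + d * d) * n.2 * n.2); first ring.
by rewrite h4 h5 h6; ring.
Qed.

Lemma mapdK m d : orth m -> mapd (minv m) (mapd m d) = d.
Proof.
move=> ho; case: d => [c r|c r|n h] /=; rewrite ?fmK //.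
have -> : Am (minv m) (Am m n) = n.
  have := fmK n ho; rewrite /fm /Am /minv /=.
  case: m ho => a b c d t1 t2 [h1 [h2 [h3 [h4 [h5 h6]]]]] /= /= => e.
  case: n e => x y /= e; congr (_, _).
  - transitivity ((a * a + c * c) * x + (a * b + c * d) * y); first ring.
    by rewrite h4 h6; ring.
  - transitivity ((a * b + c * d) * x + (b * b + d * d) * y); first ring.
    by rewrite h5 h6; ring.
congr GHalf; rewrite /dot /Am /tm /minv /=; ring.
Qed.

Lemma mapdKV m d : orth m -> mapd m (mapd (minv m) d) = d.
Proof. by move=> h; rewrite -{1}(minvK h) (mapdK _ (orth_minv h)). Qed.

Lemma wf_map m d : orth m -> gdisk_wf d -> gdisk_wf (mapd m d).
Proof. by move=> ho; case: d => [c r|c r|n h] //=; rewrite dot_Am2. Qed.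

Lemma circle_map m d z : orth m -> circle (mapd m d) (xmap (fm m) z) <-> circle d z.
Proof.
move=> ho; case: d => [c r|c r|n h]; case: z => [p|] //=; rewrite ?d2_fm //.
rewrite dot_Am //; split => [e|->]; last by [].
by apply: (addIr (dot (Am m n) (tm m))).
Qed.

Lemma interior_map m d z : orth m -> interior (mapd m d) (xmap (fm m) z) <-> interior d z.
Proof.
move=> ho; case: d => [c r|c r|n h]; case: z => [p|] //=; rewrite ?d2_fm //.
by rewrite dot_Am // ltrD2r.
Qed.

Lemma xmapKV m z : orth m -> xmap (fm m) (xmap (fm (minv m)) z) = z.
Proof. by move=> ho; case: z => [p|] //=; rewrite fmKV. Qed.
Lemma xmapK m z : orth m -> xmap (fm (minv m)) (xmap (fm m) z) = z.
Proof. by move=> ho; case: z => [p|] //=; rewrite fmK. Qed.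

Lemma descartes_map m D : orth m -> is_descartes D -> is_descartes (mapD m D).
Proof.
move=> ho [hw ht]; split => [i|i j hij] /=; first exact: wf_map.
case: (ht i j hij) => [[z [c1 [c2 hu]]] hd]; split.
  exists (xmap (fm m) z); split; first by apply/circle_map.
  split; first by apply/circle_map.
  move=> w w1 w2; rewrite -(xmapKV w ho) in w1 w2 *.
  by rewrite (hu _ (proj1 (circle_map _ _ ho) w1) (proj1 (circle_map _ _ ho) w2)).
move=> w [w1 w2]; rewrite -(xmapKV w ho) in w1 w2.
exact: (hd _ (conj (proj1 (interior_map _ _ ho) w1) (proj1 (interior_map _ _ ho) w2))).
Qed.

Lemma circle_image m d : orth m -> circle (mapd m d) = image_set (fm m) (circle d).
Proof.
move=> ho; apply: functional_extensionality => w; apply: propositional_extensionality.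
split.
  move=> hw; exists (xmap (fm (minv m)) w); split; last by rewrite xmapKV.
  by apply/(circle_map _ _ ho); rewrite xmapKV.
by case=> z [hz ->]; apply/circle_map.
Qed.

Definition Tm (m : mot) : 'M[R]_4 := \matrix_(j, k)
  (if k == i0 then
     (if j == i0 then 1 else if j == i1 then mt1 m ^+ 2 + mt2 m ^+ 2
      else if j == i2 then 2 * (ma m * mt1 m + mc m * mt2 m)
      else 2 * (mb m * mt1 m + md m * mt2 m))
   else if k == i1 then (j == i1)%:R
   else if k == i2 then
     (if j == i0 then 0 else if j == i1 then mt1 m else if j == i2 then ma m else mb m)
   else
     (if j == i0 then 0 else if j == i1 then mt2 m else if j == i2 then mc m else md m)).

Lemma dot_fm_self m c : orth m -> dot (fm m c) (fm m c) =
  dot c c + 2 * ((ma m * c.1 + mb m * c.2) * mt1 m + (mc m * c.1 + md m * c.2) * mt2 m)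
  + (mt1 m ^+ 2 + mt2 m ^+ 2).
Proof.
case: m => a b c0 d t1 t2 [h1 [h2 [h3 [h4 [h5 h6]]]]] /=; rewrite /dot /fm /=.
transitivity ((a * a + c0 * c0) * c.1 * c.1 + 2 * (a * b + c0 * d) * c.1 * c.2
   + (b * b + d * d) * c.2 * c.2 +
   2 * ((a * c.1 + b * c.2) * t1 + (c0 * c.1 + d * c.2) * t2) + (t1 ^+ 2 + t2 ^+ 2)); first ring.
by rewrite h4 h5 h6; ring.
Qed.

Lemma acc_map m D : orth m -> (forall i, gdisk_wf (circ D i)) ->
  acc (mapD m D) = acc D *m Tm m.
Proof.
move=> ho hw; apply/matrixP => i k; rewrite !mxE sum4 !mxE /=.
move: (hw i); case: (circ D i) => [c r|c r|n h] /= hr; case: (ord4P k) => [->|[->|[->|->]]];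
  rewrite /acc_row /= ?dot_fm_self //; rewrite /Am /tm /fm /dot /=; field;
  rewrite ?gt_eqF //.
Qed.
End G4.


Section G5.
Variable R : realType.

Definition vr (u : v4) : 'I_4 -> R := fun i => (nth 0 [:: e0 u; e1 u; e2 u; e3 u] i)%:~R.

Lemma qdC (u v : 'I_4 -> R) : qd u v = qd v u.
Proof. rewrite /qd; ring. Qed.

Lemma qd_ext (u u' v v' : 'I_4 -> R) : (forall i, u i = u' i) -> (forall i, v i = v' i) ->
  qd u v = qd u' v'.
Proof. by move=> h1 h2; rewrite /qd !h1 !h2. Qed.

Lemma qd_lin3 (u x y z : 'I_4 -> R) p q s :
  qd u (fun i => p * x i + q * y i + s * z i) = p * qd u x + q * qd u y + s * qd u z.
Proof. rewrite /qd; ring. Qed.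

Lemma qd_vr (u v : v4) : qd (vr u) (vr v) = (q2 u v)%:~R / 2.
Proof.
case: u => a0 a1 a2 a3; case: v => b0 b1 b2 b3.
rewrite /qd /vr /q2 /dt /sm /=.
rewrite !(intrD, intrM, intrB, intrN) /= ?rmorph1 ?intr1; by field.
Qed.

Lemma rows_cols (a b c d : R) : a * a + b * b = 1 -> c * c + d * d = 1 -> a * c + b * d = 0 ->
  a * a + c * c = 1 /\ b * b + d * d = 1 /\ a * b + c * d = 0.
Proof.
move=> h1 h2 h3.
set k := a * d - b * c.
have hk : k * k = 1.
  transitivity ((a * a + b * b) * (c * c + d * d) - (a * c + b * d) ^+ 2); first by rewrite /k; ring.
  by rewrite h1 h2 h3; ring.
have hc : c = - k * b.
  transitivity (c * (a * a + b * b) - a * (a * c + b * d)); first by rewrite h1 h3; ring.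
  by rewrite /k; ring.
have hd : d = k * a.
  transitivity (d * (a * a + b * b) - b * (a * c + b * d)); first by rewrite h1 h3; ring.
  by rewrite /k; ring.
rewrite hc hd; split; last split.
- transitivity (a * a + (k * k) * (b * b)); first ring. by rewrite hk mul1r.
- transitivity ((k * k) * (a * a) + b * b); first ring. by rewrite hk mul1r.
- transitivity ((1 - k * k) * (a * b)); first ring. by rewrite hk subrr mul0r.
Qed.

Lemma mulT (W : 'M[R]_4) (m : mot R) i :
  [/\ (W *m Tm m) i i1 = W i i1,
      (W *m Tm m) i i2 = W i i1 * mt1 m + W i i2 * ma m + W i i3 * mb m &
      (W *m Tm m) i i3 = W i i1 * mt2 m + W i i2 * mc m + W i i3 * md m].
Proof. by rewrite !mxE !sum4 !mxE /=; split; ring. Qed.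

Lemma build (D1 : config R) (B U V : v4) : is_descartes D1 ->
  (forall i, acc D1 i i1 = vr B i) ->
  q2 B U = 0 -> q2 B V = 0 -> q2 U U = 4 -> q2 V V = 4 -> q2 U V = 0 ->
  exists m, orth m /\ forall i, acc (mapD m D1) i i1 = vr B i /\
    acc (mapD m D1) i i2 = vr U i /\ acc (mapD m D1) i i3 = vr V i.
Proof.
move=> hD hB f1 f2 f3 f4 f5.
set W := acc D1.
set E := colv W i0; set bt := colv W i1; set X := colv W i2; set Y := colv W i3.
have G := gram_dual hD.
have gbX : qd bt X = 0 by rewrite G mxE /= mulr0.
have gbY : qd bt Y = 0 by rewrite G mxE /= mulr0.
have gXX : qd X X = 2 by rewrite G mxE /= mulr1.
have gYY : qd Y Y = 2 by rewrite G mxE /= mulr1.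
have gXY : qd X Y = 0 by rewrite G mxE /= mulr0.
have eb : forall i, bt i = vr B i by move=> i; rewrite -hB.
have gbU : qd bt (vr U) = 0 by rewrite (qd_ext eb (fun i => erefl)) qd_vr f1 mul0r.
have gbV : qd bt (vr V) = 0 by rewrite (qd_ext eb (fun i => erefl)) qd_vr f2 mul0r.
have gUU : qd (vr U) (vr U) = 2 by rewrite qd_vr f3 /=; field.
have gVV : qd (vr V) (vr V) = 2 by rewrite qd_vr f4 /=; field.
have gUV : qd (vr U) (vr V) = 0 by rewrite qd_vr f5 mul0r.
set a := qd (vr U) X / 2; set b := qd (vr U) Y / 2.
set c := qd (vr V) X / 2; set d := qd (vr V) Y / 2.
have gXU : qd X (vr U) = 2 * a by rewrite qdC /a; field.
have gYU : qd Y (vr U) = 2 * b by rewrite qdC /b; field.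
have gXV : qd X (vr V) = 2 * c by rewrite qdC /c; field.
have gYV : qd Y (vr V) = 2 * d by rewrite qdC /d; field.
have gYX : qd Y X = 0 by rewrite qdC.
have decG : forall (P : 'I_4 -> R) p q, qd bt P = 0 -> qd X P = 2 * p -> qd Y P = 2 * q ->
  exists t, forall i, P i = p * X i + q * Y i + t * bt i.
  move=> P p q e1 e2 e3.
  set Z := fun j => 1 * P j + (- p) * X j + (- q) * Y j.
  have z1 : qd bt Z = 0 by rewrite qd_lin3 e1 gbX gbY; ring.
  have z2 : qd X Z = 0 by rewrite qd_lin3 e2 gXX gXY; ring.
  have z3 : qd Y Z = 0 by rewrite qd_lin3 e3 gYX gYY; ring.
  have hz := decomp hD z1 z2 z3.
  exists (- qd (colv (acc D1) i0) Z / 4) => i.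
  have h := hz i; rewrite /Z in h.
  rewrite (_ : P i = (1 * P i + - p * X i + - q * Y i) + p * X i + q * Y i); last ring.
  rewrite h /bt /colv; ring.
have qUX : qd (vr U) X = 2 * a by rewrite /a; field.
have qUY : qd (vr U) Y = 2 * b by rewrite /b; field.
have qVX : qd (vr V) X = 2 * c by rewrite /c; field.
have qVY : qd (vr V) Y = 2 * d by rewrite /d; field.
have [t1 hU] := decG (vr U) a b gbU gXU gYU.
have [t2 hV] := decG (vr V) c d gbV gXV gYV.
have qUb : qd (vr U) bt = 0 by rewrite qdC.
have qVb : qd (vr V) bt = 0 by rewrite qdC.
have r1 : a * a + b * b = 1.
  move: gUU; rewrite (qd_ext (fun i => erefl) hU) qd_lin3 qUX qUY qUb => e.
  transitivity ((a * (2 * a) + b * (2 * b) + t1 * 0) / 2); first by field.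
  by rewrite e; field.
have r2 : c * c + d * d = 1.
  move: gVV; rewrite (qd_ext (fun i => erefl) hV) qd_lin3 qVX qVY qVb => e.
  transitivity ((c * (2 * c) + d * (2 * d) + t2 * 0) / 2); first by field.
  by rewrite e; field.
have r3 : a * c + b * d = 0.
  move: gUV; rewrite (qd_ext (fun i => erefl) hV) qd_lin3 qUX qUY qUb => e.
  transitivity ((c * (2 * a) + d * (2 * b) + t2 * 0) / 2); first by field.
  by rewrite e; field.
have [c1 [c2 c3]] := rows_cols r1 r2 r3.
have ho : orth (Mot a b c d t1 t2) by rewrite /orth /=.
exists (Mot a b c d t1 t2); split => // i.
rewrite (acc_map ho (proj1 hD)) -/W; have [-> -> ->] := mulT W (Mot a b c d t1 t2) i; rewrite /=.
split; first by rewrite -hB.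
split.
  by rewrite hU /X /Y /bt /colv; ring.
by rewrite hV /X /Y /bt /colv; ring.
Qed.
End G5.


Lemma lift3P (k : 'I_3) : lift ord0 k = i1 \/ lift ord0 k = i2 \/ lift ord0 k = i3.
Proof.
case: k => [[|[|[|m]]] hm].
- by left; apply: val_inj.
- by right; left; apply: val_inj.
- by right; right; apply: val_inj.
- by [].
Qed.

Lemma lift00 : lift ord0 (ord0 : 'I_3) = i1.
Proof. by apply: val_inj. Qed.

Section G6.
Variable R : realType.

Lemma vr_int (u : v4) i : is_int (vr R u i).
Proof. by exists (nth 0 [:: e0 u; e1 u; e2 u; e3 u] i). Qed.

Lemma orbit_map (m : mot R) D E : orth m -> is_descartes D -> Defs.in_orbit D E ->
  Defs.in_orbit (mapD m D) (mapD m E).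
Proof.
move=> ho hD [hE [g [hg he]]]; split; first exact: descartes_map.
exists g; split => //.
by rewrite (acc_map ho (proj1 hE)) (acc_map ho (proj1 hD)) he mulmxA.
Qed.

Lemma acc_mapK (m : mot R) D : orth m -> acc (mapD (minv m) (mapD m D)) = acc D.
Proof. by move=> ho; apply/matrixP => i k; rewrite !mxE /= mapdK. Qed.

Lemma orbit_mapV (m : mot R) D E : orth m -> is_descartes D -> Defs.in_orbit (mapD m D) E ->
  Defs.in_orbit D (mapD (minv m) E).
Proof.
move=> ho hD hO.
have hD' := descartes_map ho hD.
have := orbit_map (orth_minv ho) hD' hO.
case=> hE [g [hg he]]; split => //; exists g; split => //.
by rewrite he acc_mapK.
Qed.
End G6.

Theorem theorem4p3 (R : realType) (D : config R) :
  is_descartes D -> integral_sp D ->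
  exists f : pt R -> pt R, euclid_motion f /\
    exists D' : config R, is_descartes D' /\ strongly_integral_sp D' /\
      (forall C : xpt R -> Prop,
         (exists C0, super_packing D C0 /\ C = image_set f C0) <->
         super_packing D' C).
Proof.
move=> hD [D1 [hO1 hint]].
have hD1 := proj1 hO1.
have hc : forall i, is_int (acc D1 i i1) by move=> i; have := hint i; rewrite /curv lift00.
have [z0 h0] := hc i0; have [z1 h1] := hc i1; have [z2 h2] := hc i2; have [z3 h3] := hc i3.
set B := V4 z0 z1 z2 z3.
have hB : forall i, acc D1 i i1 = vr R B i.
  by move=> i; case: (ord4P i) => [->|[->|[->|->]]]; rewrite /vr /=.
have nB : q2 B B = 0.
  have := gram_dual hD1 i1 i1; rewrite mxE /= mulr0.
  rewrite (qd_ext hB hB) qd_vr => e.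
  apply/eqP; rewrite -(intr_eq0 R).
  by move/eqP: e; rewrite mulf_eq0 invr_eq0 pnatr_eq0 orbF.
have [U [V [f1 [f2 [f3 [f4 f5]]]]]] := frame_all B nB.
have [m [ho hm]] := build hD1 hB f1 f2 f3 f4 f5.
exists (fm m); split; first by move=> p q; apply: d2_fm.
exists (mapD m D); split; first exact: descartes_map.
split.
  exists (mapD m D1); split; first exact: orbit_map.
  move=> i k; rewrite /ccmat mxE.
  have [e1 [e2 e3]] := hm i.
  by case: (lift3P k) => [->|[->|->]]; rewrite ?e1 ?e2 ?e3; apply: vr_int.
move=> C; split.
  case=> C0 [[D'' [hO [i ->]]] ->].
  exists (mapD m D''); split; first exact: orbit_map.
  by exists i; rewrite /= circle_image.
case=> E [hO [i ->]].
exists (circle (circ (mapD (minv m) E) i)); split.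
  by exists (mapD (minv m) E); split; [exact: orbit_mapV | exists i].
by rewrite /= -circle_image // mapdKV.
Qed.
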